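(* Let $\mathcal{Y}=\{1,\dots,m\}$ be a finite set of classes and $\Delta(\mathcal{Y})$ the set of probability vectors on $\mathcal{Y}$. Let $u:\mathcal{Y}\times\mathcal{Y}\to\mathbb{R}_+$ be nonnegative and nondegenerate (for every $y$ there is $a$ with $u(a,y)>0$), and suppose the $m\times m$ matrix $U$ with entries $U_{y',y}=u(y',y)$ is invertible, with inverse $U^{-1}$. Let $\ell$ be a strictly proper loss function. Let $p^u:\Delta(\mathcal{Y})\to\Delta(\mathcal{Y})$ be the optimal utility-weighted prediction function, $p^u_y(q)=\bar u(y,q)/\sum_{y'}\bar u(y',q)$ where $\bar u(y,q)=\sum_{y'}u(y,y')q_{y'}$. Then $p^u$ is invertible, with closed-form inverse (on its image) $$[p^u_y]^{-1}(p)=\frac{\bar u^{-1}(y,p)}{\sum_{y'\in\mathcal{Y}}\bar u^{-1}(y',p)},$$ where $\bar u^{-1}(y,p)\equiv\sum_{y'\in\mathcal{Y}}(U^{-1})_{y,y'}\,p_{y'}$ is the expected utility of $y$ given $p$ under the (inverse) utility function defined by the matrix $U^{-1}$.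
   Context: A loss $\ell:\Delta(\mathcal{Y})\times\mathcal{Y}\to\mathbb{R}$ is strictly proper if for every $q\in\Delta(\mathcal{Y})$, $q$ is the unique minimizer over $p\in\Delta(\mathcal{Y})$ of $\sum_y q_y\ell(p,y)$; under this assumption $p^u(q)$ is the unique minimizer of $p\mapsto\sum_y q_y\sum_{y'}\ell(p,y')u(y',y)$. *)

(* Defs.v *)
From HB Require Import structures.
From mathcomp Require Import all_boot all_order all_algebra.
Set Implicit Arguments. Unset Strict Implicit. Unset Printing Implicit Defensive.
Import Order.TTheory GRing.Theory Num.Theory.
Local Open Scope ring_scope.

Section Defs.
Variables (R : realFieldType) (m : nat).

Definition prob_vec (q : 'I_m -> R) : Prop :=
  (forall y, 0 <= q y) /\ \sum_(y < m) q y = 1.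

Definition umx (u : 'I_m -> 'I_m -> R) : 'M[R]_m := \matrix_(i, j) u i j.

Definition ubar (u : 'I_m -> 'I_m -> R) (q : 'I_m -> R) (y : 'I_m) : R :=
  \sum_(y' < m) u y y' * q y'.

Definition pu (u : 'I_m -> 'I_m -> R) (q : 'I_m -> R) : 'I_m -> R :=
  fun y => ubar u q y / \sum_(y' < m) ubar u q y'.

Definition ubar_inv (u : 'I_m -> 'I_m -> R) (p : 'I_m -> R) (y : 'I_m) : R :=
  \sum_(y' < m) (invmx (umx u)) y y' * p y'.

Definition pu_inv (u : 'I_m -> 'I_m -> R) (p : 'I_m -> R) : 'I_m -> R :=
  fun y => ubar_inv u p y / \sum_(y' < m) ubar_inv u p y'.

Definition strictly_proper (l : ('I_m -> R) -> 'I_m -> R) : Prop :=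
  forall q, prob_vec q ->
    (forall p, prob_vec p ->
       \sum_(y < m) q y * l q y <= \sum_(y < m) q y * l p y) /\
    (forall p, prob_vec p ->
       \sum_(y < m) q y * l p y <= \sum_(y < m) q y * l q y ->
       forall y, p y = q y).
End Defs.

(* Main.v *)
Require Import Defs.
From HB Require Import structures.
From mathcomp Require Import all_boot all_order all_algebra.
Import Order.TTheory GRing.Theory Num.Theory.
Local Open Scope ring_scope.

Lemma key (R : realFieldType) (m : nat) (u : 'I_m -> 'I_m -> R) (q : 'I_m -> R) (c : R) y :
  umx u \in unitmx ->
  ubar_inv u (fun i => ubar u q i * c) y = q y * c.
Proof.
move=> Uu.
have E : (fun i => ubar u q i * c) =1 fun i => ((c *: (umx u *m \col_j q j)) i ord0).
  move=> i; rewrite mxE mxE /ubar mulrC; congr (_ * _).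
  by apply: eq_bigr => k _; rewrite !mxE.
rewrite /ubar_inv.
transitivity ((invmx (umx u) *m (c *: (umx u *m \col_j q j))) y ord0).
  rewrite mxE; apply: eq_bigr => k _; by rewrite E.
by rewrite -scalemxAr mulmxA mulVmx // mul1mx !mxE mulrC.
Qed.

Theorem theorem2 (R : realFieldType) (m : nat)
    (u : 'I_m -> 'I_m -> R) (l : ('I_m -> R) -> 'I_m -> R) :
  (forall a y, 0 <= u a y) ->
  (forall y, exists a, 0 < u a y) ->
  umx u \in unitmx ->
  strictly_proper l ->
  (* p^u is injective on Delta(Y) *)
  (forall q1 q2, prob_vec q1 -> prob_vec q2 ->
     (forall y, pu u q1 y = pu u q2 y) -> forall y, q1 y = q2 y) /\
  (* and the closed form inverts it on its image *)
  (forall q, prob_vec q -> forall y, pu_inv u (pu u q) y = q y).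
Proof.
move=> u0 nd Uu _.
have inv : forall q, prob_vec q -> forall y, pu_inv u (pu u q) y = q y.
  move=> q [q0 q1] y.
  set S := \sum_(y' < m) ubar u q y'.
  have S0 : S != 0.
    apply/lt0r_neq0.
    have ES : S = \sum_(k < m) q k * \sum_(i < m) u i k.
      rewrite /S /ubar exchange_big /=; apply: eq_bigr => k _.
      by rewrite big_distrr /=; apply: eq_bigr => i _; rewrite mulrC.
    rewrite ES.
    have [k qk] : exists k, 0 < q k.
      apply/existsP; apply: contraT; rewrite negb_exists => /forallP H.
      have : \sum_(y < m) q y <= 0.
        by rewrite sumr_le0 // => i _; rewrite leNgt H.
      by rewrite q1 ler10.
    rewrite (bigD1 k) //=; apply: ltr_wpDr.
      by rewrite sumr_ge0 // => i _; rewrite mulr_ge0 // sumr_ge0.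
    rewrite mulr_gt0 //; have [a ha] := nd k.
    rewrite (bigD1 a) //=; apply: ltr_wpDr => //.
    by rewrite sumr_ge0.
  rewrite /pu_inv /pu -/S.
  have K := key _ _ _ q (S^-1) _ Uu.
  rewrite K.
  under eq_bigr do rewrite K.
  rewrite -big_distrl /= q1 mul1r invrK.
  by rewrite divfK.
split=> //.
move=> q1 q2 h1 h2 E y.
rewrite -(inv _ h1) -(inv _ h2).
have Ei : forall z, ubar_inv u (pu u q1) z = ubar_inv u (pu u q2) z.
  by move=> z; apply: eq_bigr => k _; rewrite E.
rewrite /pu_inv Ei; congr (_ / _); apply: eq_bigr => k _; exact: Ei.
Qed.
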